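(* Let $n\geq5$. For every $1\leq i\leq n-1$ and every integer $0\leq s < i/2$, we have \[w_{i,s}\leq \frac{2}{(i+1)|L_{i+1}|}.\]
   Context: In $\{0,1,2\}^n$ (ordered coordinatewise), $L_i$ is the set of vectors with coordinate sum $i$, $L_i^s$ the elements of $L_i$ with exactly $s$ coordinates equal to $2$, $L_i^{\geq s}=\bigcup_{r\geq s}L_i^r$. For such $i,s$: \[w_{i,s}=\frac{|L_i||L_{i+1}^{\geq s+1}| - |L_{i+1}||L_i^{\geq s+1}|}{|L_i^s||L_i||L_{i+1}|(i-2s)}.\] *)

(* Defs.v *)
From HB Require Import structures.
From mathcomp Require Import all_boot all_order all_algebra.
Set Implicit Arguments. Unset Strict Implicit. Unset Printing Implicit Defensive.
Import Order.TTheory GRing.Theory Num.Theory.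

Definition vec (n : nat) := {ffun 'I_n -> 'I_3}.

Definition csum n (x : vec n) : nat := \sum_(j < n) (x j : nat).

Definition ntwos n (x : vec n) : nat := #|[set j : 'I_n | (x j : nat) == 2]|.

Definition Lev n i : {set vec n} := [set x : vec n | csum x == i].
Definition LevS n i s : {set vec n} := [set x : vec n | (csum x == i) && (ntwos x == s)].
Definition LevGe n i s : {set vec n} := [set x : vec n | (csum x == i) && (s <= ntwos x)].

Local Open Scope ring_scope.

Definition w n i s : rat :=
  ((#|Lev n i|%:R * #|LevGe n i.+1 s.+1|%:R - #|Lev n i.+1|%:R * #|LevGe n i s.+1|%:R)
   / (#|LevS n i s|%:R * #|Lev n i|%:R * #|Lev n i.+1|%:R * (i%:R - (2 * s)%:R))).

(* Main.v *)
Require Import Defs.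
From HB Require Import structures.
From mathcomp Require Import all_boot all_order all_algebra.
From mathcomp Require Import zify ring lra.
Import Order.TTheory GRing.Theory Num.Theory.
Set Implicit Arguments. Unset Strict Implicit. Unset Printing Implicit Defensive.


Definition succ3 (a : 'I_3) : 'I_3 := inord ((a + 1) %% 3).

Lemma succ3_inj : injective succ3.
Proof.
move=> [[|[|[|?]]] Ha] [[|[|[|?]]] Hb] //; rewrite /succ3 /=;
  move/(congr1 val); rewrite /= ?inordK // => _; exact: val_inj.
Qed.

Definition shift n (j : 'I_n) (x : vec n) : vec n :=
  [ffun k => if k == j then succ3 (x k) else x k].

Lemma shift_inj n j : injective (@shift n j).
Proof.
move=> x y /ffunP H; apply/ffunP => k; move: (H k); rewrite !ffunE.
by case: eqP => // _; apply: succ3_inj.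
Qed.

Lemma sum_shift n (h : 'I_3 -> nat) (j : 'I_n) (x : vec n) :
  \sum_k h (shift j x k) + h (x j) = \sum_k h (x k) + h (succ3 (x j)).
Proof.
rewrite (bigD1 j) //= [in RHS](bigD1 j) //= ffunE eqxx.
rewrite (eq_bigr (fun k => h (x k))); last by move=> k /negbTE Hk; rewrite ffunE Hk.
rewrite addnAC [RHS]addnC [in RHS]addnA [h (succ3 _) + h (x j)]addnC. by congr (_ + _); apply: eq_bigl. Qed.

Definition nv n (v : nat) (x : vec n) : nat := \sum_k ((x k : nat) == v).

Lemma ntwosE n (x : vec n) : ntwos x = nv 2 x.
Proof. by rewrite /ntwos /nv -sum1dep_card big_mkcond. Qed.

Lemma cnt n (x : vec n) : (nv 0 x + nv 1 x + nv 2 x = n)%N.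
Proof.
rewrite /nv -!big_split /= -[RHS]card_ord -sum1_card.
by apply: eq_bigr => k _; case: (x k) => [[|[|[|?]]] ?].
Qed.

Lemma csumE n (x : vec n) : csum x = (nv 1 x + 2 * nv 2 x)%N.
Proof.
rewrite /csum /nv big_distrr -big_split /=.
by apply: eq_bigr => k _; case: (x k) => [[|[|[|?]]] ?].
Qed.
Local Open Scope ring_scope.

Lemma pointwise n i (g : nat -> rat) (j : 'I_n) (x : vec n) :
  (csum (shift j x) == i.+1)%:R * (shift j x j : nat)%:R * g (nv 2 (shift j x))
  = (csum x == i)%:R * (((x j : nat) == 0%N)%:R * g (nv 2 x) +
                        2 * ((x j : nat) == 1%N)%:R * g (nv 2 x).+1).
Proof.
have Hc := sum_shift (fun a : 'I_3 => (a : nat)) j x.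
have Hn := sum_shift (fun a : 'I_3 => ((a : nat) == 2%N) : nat) j x.
rewrite /csum /nv in Hc Hn *.
rewrite ffunE eqxx.
move: Hc Hn; set S := \sum_(k < n) _; set T := \sum_k _; set U := \sum_k _; set V := \sum_k _.
case: (x j) => [[|[|[|?]]] ?] //=; rewrite /succ3 /= ?inordK //=.
- move=> HS HU; have -> : S = T.+1 by lia.
  have -> : U = V by lia.
  rewrite eqSS (_ : ((0 + 1) %% 3 = 1)%N) //; ring.
- move=> HS HU; have -> : S = T.+1 by lia.
  have -> : U = V.+1 by lia.
  rewrite eqSS (_ : ((1 + 1) %% 3 = 2)%N) //; ring.
- by move=> _ _; rewrite (_ : ((2 + 1) %% 3 = 0)%N) //; ring.
Qed.

Lemma key n i (g : nat -> rat) :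
  (i.+1)%:R * \sum_(y : vec n | csum y == i.+1) g (nv 2 y)
  = \sum_(x : vec n | csum x == i)
      ((nv 0 x)%:R * g (nv 2 x) + 2 * (nv 1 x)%:R * g (nv 2 x).+1).
Proof.
transitivity (\sum_(j < n) \sum_(y : vec n)
                 (csum y == i.+1)%:R * (y j : nat)%:R * g (nv 2 y)).
  rewrite exchange_big /= big_mkcond big_distrr /=; apply: eq_bigr => y _.
  case: eqP => [Hy|_]; last by rewrite mulr0 big1 // => j _; rewrite !mul0r.
  rewrite -Hy /csum natr_sum mulr_suml; apply: eq_bigr => j _; by rewrite mul1r.
transitivity (\sum_(j < n) \sum_(x : vec n) (csum x == i)%:R *
     (((x j : nat) == 0%N)%:R * g (nv 2 x) + 2 * ((x j : nat) == 1%N)%:R * g (nv 2 x).+1)).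
  apply: eq_bigr => j _; rewrite (reindex_inj (@shift_inj n j)).
  by apply: eq_bigr => x _; rewrite pointwise.
rewrite exchange_big /= [RHS]big_mkcond /=; apply: eq_bigr => x _.
rewrite -big_distrr /=; case: eqP => _; last by rewrite mul0r.
rewrite mul1r big_split /= -!mulr_suml -!big_distrr /= /nv !natr_sum.
by [] || (congr (_ * _ + _ * _ * _); apply: eq_bigl).
Qed.

Definition EE (i s c0 c1 t c0' c1' t' : nat) : rat :=
  ((c0'%:R * (s < t')%N%:R + 2 * c1'%:R * (s < t'.+1)%N%:R)
   - (s < t)%N%:R * (c0'%:R + 2 * c1'%:R)
   - 2 * (i%:R - (2 * s)%:R) * (t' == s)%:R).

Lemma pair_le (n i s c0 c1 t c0' c1' t' : nat) :
  (c0 + c1 + t = n)%N -> (c1 + 2 * t = i)%N ->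
  (c0' + c1' + t' = n)%N -> (c1' + 2 * t' = i)%N ->
  EE i s c0 c1 t c0' c1' t' + EE i s c0' c1' t' c0 c1 t <= 0.
Proof.
move=> /(congr1 (fun m => m%:R : rat)) h1 /(congr1 (fun m => m%:R : rat)) h2
       /(congr1 (fun m => m%:R : rat)) h3 /(congr1 (fun m => m%:R : rat)) h4.
rewrite !natrD ?natrM in h1 h2 h3 h4.
rewrite /EE !ltnS.
case: (ltngtP s t) => H; case: (ltngtP s t') => H'; rewrite ?natrM /=;
  try (move/(congr1 (fun m => m%:R : rat)): H => H);
  try (move/(congr1 (fun m => m%:R : rat)): H' => H');
  try (move: H; rewrite -(ltr_nat rat) => H);
  try (move: H'; rewrite -(ltr_nat rat) => H');
  lra.
Qed.

Lemma dbl_le0 n i s :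
  \sum_(x : vec n | csum x == i) \sum_(x' : vec n | csum x' == i)
     EE i s (nv 0 x) (nv 1 x) (nv 2 x) (nv 0 x') (nv 1 x') (nv 2 x') <= 0.
Proof.
set S := (X in X <= 0).
have -> : S = (S + S) / 2 by field.
rewrite pmulr_lle0 // {2}/S exchange_big /= /S -big_split /=.
apply: sumr_le0 => x Hx; rewrite -big_split /=; apply: sumr_le0 => x' Hx'.
apply: (pair_le (n := n)); rewrite ?cnt //.
- by rewrite -csumE (eqP Hx).
- by rewrite -csumE (eqP Hx').
Qed.

Lemma core n i s :
  (i.+1)%:R * ((\sum_(x : vec n | csum x == i) (1 : rat)) *
                 (\sum_(y : vec n | csum y == i.+1) (s < nv 2 y)%N%:R)
   - (\sum_(y : vec n | csum y == i.+1) 1) *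
       (\sum_(x : vec n | csum x == i) (s < nv 2 x)%N%:R))
  <= 2 * (\sum_(x : vec n | csum x == i) (nv 2 x == s)%:R) *
       (\sum_(x : vec n | csum x == i) 1) * (i%:R - (2 * s)%:R).
Proof.
rewrite -subr_le0.
have K1 := key n i (fun _ => 1).
have K2 := key n i (fun t => (s < t)%N%:R).
rewrite /= in K1 K2.
set A := \sum_(x : vec n | csum x == i) (1 : rat).
set B := \sum_(y : vec n | csum y == i.+1) (1 : rat).
set Bg := \sum_(y : vec n | csum y == i.+1) (s < nv 2 y)%N%:R.
set G := \sum_(x : vec n | csum x == i) (s < nv 2 x)%N%:R.
set As := \sum_(x : vec n | csum x == i) (nv 2 x == s)%:R.
have -> : i.+1%:R * (A * Bg - B * G) = A * (i.+1%:R * Bg) - (i.+1%:R * B) * G by ring.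
rewrite K1 K2.
have sc : forall c : rat, \sum_(x : vec n | csum x == i) c = A * c.
  by move=> c; rewrite /A mulr_suml; under [RHS]eq_bigr do rewrite mul1r.
set U := \sum_(x | csum x == i) _.
have EV : \sum_(x : vec n | csum x == i) ((nv 0 x)%:R * 1 + 2 * (nv 1 x)%:R * 1)
   = \sum_(x : vec n | csum x == i) ((nv 0 x)%:R + 2 * (nv 1 x)%:R : rat).
  by apply: eq_bigr => x _; rewrite !mulr1.
rewrite EV.
set V0 := \sum_(x | csum x == i) _.
have H := dbl_le0 n i s.
rewrite /EE in H.
rewrite (eq_bigr (fun x : vec n => U - (s < nv 2 x)%N%:R * V0
                   - 2 * (i%:R - (2 * s)%:R) * As)) in H; last first.
  by move=> x _; rewrite !sumrB -!mulr_sumr.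
rewrite !sumrB -!mulr_suml !sc in H.
have E : A * U - V0 * G - 2 * As * A * (i%:R - (2 * s)%:R)
       = A * U - G * V0 - A * 2 * (i%:R - (2 * s)%:R) * As by ring.
by rewrite E; exact: H.
Qed.

Lemma card1 n (P : pred (vec n)) : (#|[set x | P x]|%:R : rat) = \sum_(x | P x) 1.
Proof. by rewrite -sum1dep_card natr_sum. Qed.

Lemma card2 n (P Q : pred (vec n)) :
  (#|[set x | P x && Q x]|%:R : rat) = \sum_(x | P x) (Q x)%:R.
Proof.
rewrite -sum1dep_card natr_sum big_mkcondr /=; apply: eq_bigr => x _.
by case: (Q x).
Qed.

Theorem mainTheorem11 (n i s : nat) :
  (5 <= n)%N -> (1 <= i)%N -> (i <= n - 1)%N -> (2 * s < i)%N ->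
  w n i s <= 2 / ((i.+1)%:R * (#|Lev n i.+1|)%:R).
Proof.
move=> _ _ _ hs.
rewrite /w /Lev /LevS /LevGe.
rewrite (card2 (fun x => csum x == i) (fun x => ntwos x == s)).
rewrite (card2 (fun x => csum x == i) (fun x => s.+1 <= ntwos x)%N).
rewrite (card2 (fun x => csum x == i.+1) (fun x => s.+1 <= ntwos x)%N).
rewrite !card1.
have E1 : forall j, \sum_(x : vec n | csum x == j) ((s < ntwos x)%N%:R : rat)
   = \sum_(x : vec n | csum x == j) (s < nv 2 x)%N%:R.
  by move=> j; apply: eq_bigr => x _; rewrite ntwosE.
have E2 : \sum_(x : vec n | csum x == i) ((ntwos x == s)%:R : rat)
   = \sum_(x : vec n | csum x == i) (nv 2 x == s)%:R.
  by apply: eq_bigr => x _; rewrite ntwosE.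
rewrite !E1 E2.
have Hc := core n i s.
set A := \sum_(x : vec n | csum x == i) (1 : rat) in Hc *.
set B := \sum_(y : vec n | csum y == i.+1) (1 : rat) in Hc *.
set Bg := \sum_(y : vec n | csum y == i.+1) (s < nv 2 y)%N%:R in Hc *.
set G := \sum_(x : vec n | csum x == i) (s < nv 2 x)%N%:R in Hc *.
set As := \sum_(x : vec n | csum x == i) (nv 2 x == s)%:R in Hc *.
have hd : 0 < i%:R - (2 * s)%:R :> rat by rewrite subr_gt0 ltr_nat.
have hA : 0 <= A by apply: sumr_ge0.
have hB : 0 <= B by apply: sumr_ge0.
have hAs : 0 <= As by apply: sumr_ge0.
set d := i%:R - (2 * s)%:R in hd Hc *.
have hD : 0 <= As * A * B * d by rewrite !mulr_ge0 // ltW.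
case: (eqVneq (As * A * B * d) 0) => [->|nz].
  by rewrite invr0 mulr0 divr_ge0 // mulr_ge0.
have hDp : 0 < As * A * B * d by rewrite lt_def nz.
have nB : B != 0 by apply: contra nz => /eqP ->; rewrite !(mulr0, mul0r).
rewrite ler_pdivrMr //.
have -> : 2 / (i.+1%:R * B) * (As * A * B * d) = (2 * As * A * d) / i.+1%:R.
  by field; rewrite nB andbT addrC natr1 pnatr_eq0.
by rewrite ler_pdivlMr // mulrC.
Qed.
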